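(* Every finitely-generated $\underline{\mathbb Z/2}$-module $M$ (i.e. with $M_\Theta$ and $M_\bullet$ finite-dimensional) is isomorphic to a direct sum of copies of $H$, $H^{op}$, $F$, $S_\bullet$ and $S_\Theta$. The number of summands of each type is uniquely determined: letting $f$ be the rank of $1+t\colon M_\Theta\to M_\Theta$, the number of $F$ summands is $f$; the number of $H^{op}$ summands is $\dim M_\Theta-f-\dim\ker p_*$; the number of $H$ summands is $\dim M_\bullet-\dim\ker p^*-f$; the number of $S_\bullet$ summands is $\dim\ker p^*-\dim M_\Theta+f+\dim\ker p_*$; and the number of $S_\Theta$ summands is $\dim\ker p_*-\dim M_\bullet+\dim\ker p^*$.
   Context: A $\underline{\mathbb Z/2}$-module is a pair of $\mathbb F_2$-vector spaces $M_\Theta,M_\bullet$ with linear maps $t\colon M_\Theta\to M_\Theta$, $p^*\colon M_\bullet\to M_\Theta$, $p_*\colon M_\Theta\to M_\bullet$ satisfying $tp^*=p^*$, $p_*t=p_*$, $t^2=1$, $p^*p_*=1+t$ and $p_*p^*=0$; dimensions are over $\mathbb F_2$. The modules: $H$ has both spaces $\mathbb F_2$, $t=p^*=\mathrm{id}$, $p_*=0$; $H^{op}$ has both spaces $\mathbb F_2$, $t=p_*=\mathrm{id}$, $p^*=0$; $F$ has $F_\Theta=\mathbb F_2^2$ with $t$ the swap, $F_\bullet=\mathbb F_2$, $p_*(x,y)=x+y$, $p^*(z)=(z,z)$; $S_\bullet$ has $(S_\bullet)_\Theta=0$, $(S_\bullet)_\bullet=\mathbb F_2$; $S_\Theta$ has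 $(S_\Theta)_\Theta=\mathbb F_2$ with $t=\mathrm{id}$ and $(S_\Theta)_\bullet=0$. *)

(* Defs.v *)
From mathcomp Require Import all_boot all_order all_algebra.
Set Implicit Arguments. Unset Strict Implicit. Unset Printing Implicit Defensive.
Import GRing.Theory.
Local Open Scope ring_scope.

(* A Z/2-module (Mackey-functor style) with finite-dimensional F_2 spaces,
   in coordinates: M_Theta = F_2^dT, M_bullet = F_2^dB, linear maps act on
   ROW vectors on the right (x |-> x *m A), so composition g o f is
   (matrix of f) *m (matrix of g).
   tm : M_Theta -> M_Theta, ps = p^* : M_bullet -> M_Theta,
   pl = p_* : M_Theta -> M_bullet. *)
Record z2data := Z2D {
  dT : nat; dB : nat;
  tm : 'M['F_2]_dT;
  ps : 'M['F_2]_(dB, dT);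
  pl : 'M['F_2]_(dT, dB) }.

Definition is_Z2mod (M : z2data) : Prop :=
  [/\ ps M *m tm M = ps M,
      tm M *m pl M = pl M,
      tm M *m tm M = 1%:M,
      pl M *m ps M = 1%:M + tm M
    & ps M *m pl M = 0].

Definition z2iso (M N : z2data) : Prop :=
  exists (a : 'M['F_2]_(dT M, dT N)) (a' : 'M['F_2]_(dT N, dT M))
         (b : 'M['F_2]_(dB M, dB N)) (b' : 'M['F_2]_(dB N, dB M)),
    [/\ a *m a' = 1%:M, a' *m a = 1%:M, b *m b' = 1%:M & b' *m b = 1%:M] /\
    [/\ tm M *m a = a *m tm N,
        ps M *m a = b *m ps N
      & pl M *m b = a *m pl N].

Definition z2sum (M N : z2data) : z2data :=
  Z2D (block_mx (tm M) 0 0 (tm N))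
      (block_mx (ps M) 0 0 (ps N))
      (block_mx (pl M) 0 0 (pl N)).

Definition z2zero : z2data := @Z2D 0 0 0 0 0.

Fixpoint z2pow (n : nat) (M : z2data) : z2data :=
  match n with 0 => z2zero | n'.+1 => z2sum M (z2pow n' M) end.

Definition modH : z2data := @Z2D 1 1 1%:M 1%:M 0.
Definition modHop : z2data := @Z2D 1 1 1%:M 0 1%:M.
(* F : F_Theta = F_2^2, t = swap, F_bullet = F_2, p_*(x,y) = x+y, p^* z = (z,z) *)
Definition modF : z2data :=
  @Z2D 2 1 (\matrix_(i < 2, j < 2) (if i == j then 0 else 1))
           (const_mx 1) (const_mx 1).
Definition modSb : z2data := @Z2D 0 1 0 0 0.
Definition modSt : z2data := @Z2D 1 0 1%:M 0 0.

Definition z2std (h ho f sb st : nat) : z2data :=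
  z2sum (z2pow h modH) (z2sum (z2pow ho modHop)
    (z2sum (z2pow f modF) (z2sum (z2pow sb modSb) (z2pow st modSt)))).

(* Main.v *)
Require Import Defs.
From mathcomp Require Import all_boot all_order all_algebra.
From mathcomp Require Import zify.
Set Implicit Arguments. Unset Strict Implicit. Unset Printing Implicit Defensive.
Import GRing.Theory.
Local Open Scope ring_scope.

Lemma intw_swap m n p q (a : 'M['F_2]_(m,n)) (a' : 'M_(n,m)) (b : 'M_(p,q)) (b' : 'M_(q,p))
  (X : 'M_(p,m)) (Y : 'M_(q,n)) :
  b' *m b = 1%:M -> a *m a' = 1%:M -> X *m a = b *m Y -> b' *m X = Y *m a'.
Proof.
move=> H1 H2 H.
by rewrite -[b' *m X]mulmx1 -H2 !mulmxA -(mulmxA b') H !mulmxA H1 mul1mx.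
Qed.

Lemma intw_unswap m n p q (a : 'M['F_2]_(m,n)) (a' : 'M_(n,m)) (b : 'M_(p,q)) (b' : 'M_(q,p))
  (X : 'M_(p,m)) (Y : 'M_(q,n)) :
  b *m b' = 1%:M -> a' *m a = 1%:M -> b' *m X = Y *m a' -> X *m a = b *m Y.
Proof.
move=> H1 H2 H.
by rewrite -[X *m a]mul1mx -H1 -!mulmxA (mulmxA b') H -!mulmxA H2 mulmx1.
Qed.

Lemma iso_refl M : z2iso M M.
Proof.
exists 1%:M, 1%:M, 1%:M, 1%:M; split; first by rewrite !mulmx1.
by rewrite !mulmx1 !mul1mx.
Qed.

Lemma iso_sym M N : z2iso M N -> z2iso N M.
Proof.
move=> [a [a' [b [b' [[h1 h2 h3 h4] [Ht Hs Hl]]]]]].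
exists a', a, b', b; split; first by [].
split.
- by symmetry; apply: (intw_swap h2 h1 Ht).
- by symmetry; apply: (intw_swap h4 h1 Hs).
- by symmetry; apply: (intw_swap h2 h3 Hl).
Qed.

Lemma iso_trans M N P : z2iso M N -> z2iso N P -> z2iso M P.
Proof.
move=> [a [a' [b [b' [[h1 h2 h3 h4] [Ht Hs Hl]]]]]].
move=> [c [c' [d [d' [[k1 k2 k3 k4] [Kt Ks Kl]]]]]].
exists (a *m c), (c' *m a'), (b *m d), (d' *m b'); split; split.
- by rewrite -mulmxA (mulmxA c) k1 mul1mx h1.
- by rewrite -mulmxA (mulmxA a') h2 mul1mx k2.
- by rewrite -mulmxA (mulmxA d) k3 mul1mx h3.
- by rewrite -mulmxA (mulmxA b') h4 mul1mx k4.
- by rewrite mulmxA Ht -mulmxA Kt mulmxA.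
- by rewrite mulmxA Hs -mulmxA Ks mulmxA.
- by rewrite mulmxA Hl -mulmxA Kl mulmxA.
Qed.

Lemma mul_dblock m1 m2 n1 n2 p1 p2 (A1 : 'M['F_2]_(m1,n1)) (A2 : 'M_(m2,n2))
  (B1 : 'M_(n1,p1)) (B2 : 'M_(n2,p2)) :
  block_mx A1 0 0 A2 *m block_mx B1 0 0 B2 = block_mx (A1 *m B1) 0 0 (A2 *m B2).
Proof. by rewrite mulmx_block !mulmx0 !mul0mx !addr0 !add0r. Qed.

Lemma iso_sum M1 M2 N1 N2 : z2iso M1 N1 -> z2iso M2 N2 -> z2iso (z2sum M1 M2) (z2sum N1 N2).
Proof.
move=> [a [a' [b [b' [[h1 h2 h3 h4] [Ht Hs Hl]]]]]].
move=> [c [c' [d [d' [[k1 k2 k3 k4] [Kt Ks Kl]]]]]].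
exists (block_mx a 0 0 c), (block_mx a' 0 0 c'), (block_mx b 0 0 d), (block_mx b' 0 0 d').
split; split; rewrite /= !mul_dblock ?h1 ?h2 ?h3 ?h4 ?k1 ?k2 ?k3 ?k4 -?scalar_mx_block //.
- by rewrite Ht Kt.
- by rewrite Hs Ks.
- by rewrite Hl Kl.
Qed.

Lemma iso_comm M N : z2iso (z2sum M N) (z2sum N M).
Proof.
pose a m n : 'M['F_2]_(m + n, n + m) := block_mx 0 1%:M 1%:M 0.
have aa m n : a m n *m a n m = 1%:M.
  by rewrite /a mulmx_block !mulmx0 !mul0mx !mulmx1 !addr0 !add0r -scalar_mx_block.
exists (a _ _), (a _ _), (a _ _), (a _ _); split; split; rewrite ?aa //=;
  by rewrite /a !mulmx_block !mulmx0 !mul0mx !mulmx1 !mul1mx !addr0 !add0r.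
Qed.

Lemma iso_cast M N (e1 : dT M = dT N) (e2 : dB M = dB N) :
  tm N = castmx (e1, e1) (tm M) -> ps N = castmx (e2, e1) (ps M) ->
  pl N = castmx (e1, e2) (pl M) -> z2iso M N.
Proof.
case: M e1 e2 => m1 n1 t1 s1 l1; case: N => m2 n2 t2 s2 l2 /= e1 e2.
case: m2 / e1 t2 s2 l2; case: n2 / e2 => t2 s2 l2.
rewrite !castmx_id => -> -> ->; exact: iso_refl.
Qed.

Lemma iso_assoc A B C : z2iso (z2sum (z2sum A B) C) (z2sum A (z2sum B C)).
Proof.
apply: (@iso_cast (z2sum (z2sum A B) C) (z2sum A (z2sum B C)) (esym (addnA (dT A) (dT B) (dT C))) (esym (addnA (dB A) (dB B) (dB C)))) => /=;
by rewrite -[0 in LHS]row_mx0 -[0 in X in block_mx _ _ X _]col_mx0 block_mxA /= row_mx0 col_mx0.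
Qed.
Lemma modF_tm : tm modF = block_mx 0 1%:M 1%:M 0 :> 'M_(1+1).
Proof.
apply/matrixP=> i j.
case: (split_ordP i) => i' ->; case: (split_ordP j) => j' ->;
rewrite ?block_mxEul ?block_mxEur ?block_mxEdl ?block_mxEdr !mxE (ord1 i') (ord1 j') //.
Qed.
Lemma F2_11 : (1 + 1 : 'F_2) = 0. Proof. by apply/eqP. Qed.

Definition rT M := \rank ((1%:M + tm M)%R).
Definition rS M := \rank (ps M).
Definition rL M := \rank (pl M).

Lemma rank_mulr_inv m n p (X : 'M['F_2]_(m,n)) (a : 'M_(n,p)) (a' : 'M_(p,n)) :
  a *m a' = 1%:M -> \rank (X *m a) = \rank X.
Proof.
move=> h; apply/eqP; rewrite eqn_leq mxrankM_maxl /=.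
by rewrite -{1}[X]mulmx1 -h mulmxA mxrankM_maxl.
Qed.

Lemma rank_mull_inv m n p (Y : 'M['F_2]_(n,p)) (a : 'M_(m,n)) (a' : 'M_(n,m)) :
  a' *m a = 1%:M -> \rank (a *m Y) = \rank Y.
Proof.
move=> h; apply/eqP; rewrite eqn_leq mxrankM_maxr /=.
by rewrite -{1}[Y]mul1mx -h -mulmxA mxrankM_maxr.
Qed.

Lemma rank_conj m n (X : 'M['F_2]_m) (Y : 'M_n) a a' :
  a *m a' = 1%:M -> a' *m a = 1%:M -> X *m a = a *m Y -> \rank X = \rank Y.
Proof.
by move=> h1 h2 E; rewrite -(rank_mulr_inv X h1) E (rank_mull_inv Y h2).
Qed.

Lemma iso_inv M N : z2iso M N ->
  [/\ dT M = dT N, dB M = dB N, rT M = rT N, rS M = rS N & rL M = rL N].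
Proof.
move=> [a [a' [b [b' [[h1 h2 h3 h4] [Ht Hs Hl]]]]]].
split.
- apply/eqP; rewrite eqn_leq; apply/andP; split.
    by rewrite -{1}(mxrank1 'F_2 (dT M)) -h1 (leq_trans (mxrankM_maxl _ _)) // rank_leq_col.
  by rewrite -{1}(mxrank1 'F_2 (dT N)) -h2 (leq_trans (mxrankM_maxl _ _)) // rank_leq_col.
- apply/eqP; rewrite eqn_leq; apply/andP; split.
    by rewrite -{1}(mxrank1 'F_2 (dB M)) -h3 (leq_trans (mxrankM_maxl _ _)) // rank_leq_col.
  by rewrite -{1}(mxrank1 'F_2 (dB N)) -h4 (leq_trans (mxrankM_maxl _ _)) // rank_leq_col.
- rewrite /rT; apply: (rank_conj h1 h2).
  by rewrite mulmxDl mulmxDr mul1mx mulmx1 Ht.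
- by rewrite /rS -(rank_mulr_inv _ h1) Hs (rank_mull_inv _ h4).
- by rewrite /rL -(rank_mulr_inv _ h3) Hl (rank_mull_inv _ h2).
Qed.

Lemma inv_sum M N :
  [/\ dT (z2sum M N) = (dT M + dT N)%N, dB (z2sum M N) = (dB M + dB N)%N,
      rT (z2sum M N) = (rT M + rT N)%N, rS (z2sum M N) = (rS M + rS N)%N
    & rL (z2sum M N) = (rL M + rL N)%N].
Proof.
split => //; rewrite /rT /rS /rL /= -?rank_diag_block_mx //.
by rewrite [1%:M]scalar_mx_block add_block_mx !addr0.
Qed.

Lemma rank0dim m n (A : 'M['F_2]_(m,n)) : (m = 0 \/ n = 0)%N -> \rank A = 0%N.
Proof.
by case=> e; apply/eqP; rewrite -leqn0; [rewrite -{2}e rank_leq_row | rewrite -{2}e rank_leq_col].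
Qed.

Lemma inv_pow k M :
  [/\ dT (z2pow k M) = (k * dT M)%N, dB (z2pow k M) = (k * dB M)%N,
      rT (z2pow k M) = (k * rT M)%N, rS (z2pow k M) = (k * rS M)%N
    & rL (z2pow k M) = (k * rL M)%N].
Proof.
elim: k => [|k [e1 e2 e3 e4 e5]].
  by split => //=; rewrite /rT /rS /rL /= rank0dim //; left.
case: (inv_sum M (z2pow k M)) => f1 f2 f3 f4 f5.
by split; rewrite /= ?f1 ?f2 ?f3 ?f4 ?f5 ?e1 ?e2 ?e3 ?e4 ?e5 mulSn.
Qed.

Lemma one11 : (1%:M + 1%:M : 'M['F_2]_1) = 0.
Proof. by rewrite -raddfD /= F2_11 raddf0. Qed.

Lemma inv_H : [/\ dT modH = 1%N, dB modH = 1%N, rT modH = 0%N, rS modH = 1%N & rL modH = 0%N].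
Proof. by split; rewrite /rT /rS /rL /= ?one11 ?mxrank0 ?mxrank1. Qed.
Lemma inv_Hop : [/\ dT modHop = 1%N, dB modHop = 1%N, rT modHop = 0%N, rS modHop = 0%N & rL modHop = 1%N].
Proof. by split; rewrite /rT /rS /rL /= ?one11 ?mxrank0 ?mxrank1. Qed.
Lemma inv_Sb : [/\ dT modSb = 0%N, dB modSb = 1%N, rT modSb = 0%N, rS modSb = 0%N & rL modSb = 0%N].
Proof. by split; rewrite /rT /rS /rL /= ?mxrank0 // rank0dim //; left. Qed.
Lemma inv_St : [/\ dT modSt = 1%N, dB modSt = 0%N, rT modSt = 0%N, rS modSt = 0%N & rL modSt = 0%N].
Proof. by split; rewrite /rT /rS /rL /= ?one11 ?mxrank0. Qed.

Lemma rank1_of m n (A : 'M['F_2]_(m,n)) : (\rank A <= 1)%N -> A != 0 -> \rank A = 1%N.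
Proof. by rewrite -mxrank_eq0; case: (\rank A) => [|[|]]. Qed.

Lemma inv_F : [/\ dT modF = 2%N, dB modF = 1%N, rT modF = 1%N, rS modF = 1%N & rL modF = 1%N].
Proof.
split => //; rewrite /rT /rS /rL /=.
- apply: rank1_of.
    have -> : (1%:M + \matrix_(i < 2, j < 2) (if i == j then 0 else 1) : 'M['F_2]_2)
       = const_mx 1 *m (const_mx 1 : 'M_(1,2)).
      apply/matrixP => i j; rewrite !mxE big_ord1 !mxE mulr1.
      by case: (i == j); rewrite ?addr0 ?add0r.
    by rewrite (leq_trans (mxrankM_maxl _ _)) // rank_leq_col.
  by apply/negP => /eqP /matrixP /(_ 0 0); rewrite !mxE.
- by apply: rank1_of; [rewrite rank_leq_row | apply/negP => /eqP /matrixP /(_ 0 0); rewrite !mxE].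
- by apply: rank1_of; [rewrite rank_leq_col | apply/negP => /eqP /matrixP /(_ 0 0); rewrite !mxE].
Qed.

Lemma inv_std h ho f sb st :
  let S := z2std h ho f sb st in
  [/\ dT S = (h + ho + 2 * f + st)%N, dB S = (h + ho + f + sb)%N,
      rT S = f, rS S = (h + f)%N & rL S = (ho + f)%N].
Proof.
rewrite /z2std.
case: (inv_sum (z2pow h modH) (z2sum (z2pow ho modHop)
    (z2sum (z2pow f modF) (z2sum (z2pow sb modSb) (z2pow st modSt))))) => a1 a2 a3 a4 a5.
case: (inv_sum (z2pow ho modHop)
    (z2sum (z2pow f modF) (z2sum (z2pow sb modSb) (z2pow st modSt)))) => b1 b2 b3 b4 b5.
case: (inv_sum (z2pow f modF) (z2sum (z2pow sb modSb) (z2pow st modSt))) => c1 c2 c3 c4 c5.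
case: (inv_sum (z2pow sb modSb) (z2pow st modSt)) => d1 d2 d3 d4 d5.
case: (inv_pow h modH) => p1 p2 p3 p4 p5.
case: (inv_pow ho modHop) => q1 q2 q3 q4 q5.
case: (inv_pow f modF) => r1 r2 r3 r4 r5.
case: (inv_pow sb modSb) => s1 s2 s3 s4 s5.
case: (inv_pow st modSt) => u1 u2 u3 u4 u5.
case: inv_H => H1 H2 H3 H4 H5. case: inv_Hop => O1 O2 O3 O4 O5.
case: inv_F => F1 F2 F3 F4 F5. case: inv_Sb => B1 B2 B3 B4 B5.
case: inv_St => T1 T2 T3 T4 T5.
split; [rewrite a1 b1 c1 d1 p1 q1 r1 s1 u1 H1 O1 F1 B1 T1 | rewrite a2 b2 c2 d2 p2 q2 r2 s2 u2 H2 O2 F2 B2 T2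
 | rewrite a3 b3 c3 d3 p3 q3 r3 s3 u3 H3 O3 F3 B3 T3 | rewrite a4 b4 c4 d4 p4 q4 r4 s4 u4 H4 O4 F4 B4 T4
 | rewrite a5 b5 c5 d5 p5 q5 r5 s5 u5 H5 O5 F5 B5 T5]; lia.
Qed.

Lemma uniq_part (M : z2data) h ho f sb st : z2iso M (z2std h ho f sb st) ->
     let fr := \rank ((1%:M + tm M)%R) in
     let kps := \rank (kermx (ps M)) in
     let kpl := \rank (kermx (pl M)) in
     [/\ f = fr,
         ho%:Z = (dT M)%:Z - fr%:Z - kpl%:Z,
         h%:Z = (dB M)%:Z - kps%:Z - fr%:Z,
         sb%:Z = kps%:Z - (dT M)%:Z + fr%:Z + kpl%:Z
       & st%:Z = kpl%:Z - (dB M)%:Z + kps%:Z].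
Proof.
move=> /iso_inv [e1 e2 e3 e4 e5] fr kps kpl.
case: (inv_std h ho f sb st) => s1 s2 s3 s4 s5.
have Hf : fr = f by rewrite /fr -/(rT M) e3 s3.
have Hs : kps = (dB M - rS M)%N by rewrite /kps mxrank_ker.
have Hl : kpl = (dT M - rL M)%N by rewrite /kpl mxrank_ker.
rewrite Hs Hl Hf e1 e2 e4 e5 s1 s2 s4 s5.
split; lia.
Qed.
Lemma complement n k (u : 'M['F_2]_(k, n)) (c : 'M_(n, k)) : u *m c = 1%:M ->
  exists r (v : 'M_(r, n)) (d : 'M_(n, r)),
    [/\ v *m c = 0, u *m d = 0, v *m d = 1%:M & c *m u + d *m v = 1%:M].
Proof.
move=> uc.
pose e := 1%:M - c *m u.
have ec : e *m c = 0 by rewrite /e mulmxBl mul1mx -mulmxA uc mulmx1 subrr.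
have ue : u *m e = 0 by rewrite /e mulmxBr mulmx1 mulmxA uc mul1mx subrr.
have ecu : c *m u + e = 1%:M by rewrite /e addrC subrK.
clearbody e.
pose v := row_base e.
have vle : (v <= e)%MS by rewrite /v eq_row_base.
have elv : (e <= v)%MS by rewrite /v eq_row_base.
have [d0 Hd0] : exists d0, v *m d0 = 1%:M by apply/row_freeP; exact: row_base_free.
have vc : v *m c = 0 by rewrite -(mulmxKpV vle) -mulmxA ec mulmx0.
have Ee : e = 1%:M - c *m u by rewrite -ecu (addrC (c *m u)) addrK.
have ve : v *m e = v.
  transitivity (v *m (1%:M - c *m u)); first by congr (v *m _).
  by rewrite mulmxBr mulmx1 mulmxA vc mul0mx subr0.
exists (\rank e), v, (e *m d0); split.
- exact: vc.
- by rewrite mulmxA ue mul0mx.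
- by rewrite mulmxA ve Hd0.
- have E := mulmxKpV elv.
  have edv : e *m d0 *m v = e.
    by rewrite -[X in X *m d0]E -(mulmxA _ v d0) Hd0 mulmx1 E.
  by rewrite edv.
Qed.
Lemma iso_Z2mod M N : is_Z2mod M -> z2iso M N -> is_Z2mod N.
Proof.
move=> [m1 m2 m3 m4 m5] [a [a' [b [b' [[h1 h2 h3 h4] [Ht Hs Hl]]]]]].
have Et : tm N = a' *m tm M *m a by rewrite -mulmxA Ht mulmxA h2 mul1mx.
have Es : ps N = b' *m ps M *m a by rewrite -mulmxA Hs mulmxA h4 mul1mx.
have El : pl N = a' *m pl M *m b by rewrite -mulmxA Hl mulmxA h2 mul1mx.
split; rewrite ?Et ?Es ?El !mulmxA.
- by rewrite -(mulmxA _ a a') h1 mulmx1 -(mulmxA _ (ps M) (tm M)) m1.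
- by rewrite -(mulmxA _ a a') h1 mulmx1 -(mulmxA _ (tm M) (pl M)) m2.
- by rewrite -(mulmxA _ a a') h1 mulmx1 -(mulmxA _ (tm M) (tm M)) m3 mulmx1 h2.
- rewrite -(mulmxA _ b b') h3 mulmx1 -(mulmxA _ (pl M) (ps M)) m4.
  by rewrite mulmxDr mulmx1 mulmxDl h2.
- by rewrite -(mulmxA _ a a') h1 mulmx1 -(mulmxA _ (ps M) (pl M)) m5 mulmx0 mul0mx.
Qed.

Lemma block_eq1 m n (A : 'M['F_2]_m) (B : 'M_n) : block_mx A 0 0 B = 1%:M -> B = 1%:M.
Proof. by rewrite [1%:M]scalar_mx_block => /eq_block_mx []. Qed.
Lemma block_eq1D m n (A A' : 'M['F_2]_m) (B B' : 'M_n) :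
  block_mx A 0 0 B = 1%:M + block_mx A' 0 0 B' -> B = 1%:M + B'.
Proof. by rewrite [1%:M]scalar_mx_block add_block_mx !addr0 => /eq_block_mx []. Qed.
Lemma block_eq0 m n p q (A : 'M['F_2]_(m,n)) (B : 'M_(p,q)) : block_mx A 0 0 B = 0 -> B = 0.
Proof. by rewrite -block_mx0 => /eq_block_mx []. Qed.

Lemma Z2mod_sumr A B : is_Z2mod (z2sum A B) -> is_Z2mod B.
Proof.
move=> [/=]; rewrite !mul_dblock.
move=> /eq_block_mx [_ _ _ m1] /eq_block_mx [_ _ _ m2] /block_eq1 m3 /block_eq1D m4 /block_eq0 m5.
by split.
Qed.

Lemma split_lemma M X (u : 'M['F_2]_(dT X, dT M)) (u2 : 'M_(dB X, dB M))
  (c : 'M_(dT M, dT X)) (c2 : 'M_(dB M, dB X)) :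
 is_Z2mod M -> u *m c = 1%:M -> u2 *m c2 = 1%:M ->
 u *m tm M = tm X *m u -> u2 *m ps M = ps X *m u -> u *m pl M = pl X *m u2 ->
 tm M *m c = c *m tm X -> ps M *m c = c2 *m ps X -> pl M *m c2 = c *m pl X ->
 exists M', [/\ is_Z2mod M', (dT M' + dB M' + (dT X + dB X) <= dT M + dB M)%N
   & z2iso M (z2sum X M')].
Proof.
move=> HM uc uc2 Ut Us Ul Ct Cs Cl.
have [r [v [d [vc ud vd cdv]]]] := complement uc.
have [r2 [v2 [d2 [vc2 ud2 vd2 cdv2]]]] := complement uc2.
pose M' := Z2D (v *m tm M *m d) (v2 *m ps M *m d) (v *m pl M *m d2).
have dv : d *m v = 1%:M - c *m u by rewrite -cdv addrAC subrr add0r.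
have dv2 : d2 *m v2 = 1%:M - c2 *m u2 by rewrite -cdv2 addrAC subrr add0r.
have Vt : v *m tm M = (v *m tm M *m d) *m v.
  rewrite -mulmxA dv mulmxBr mulmx1 [v *m tm M *m _]mulmxA -(mulmxA v) Ct.
  by rewrite mulmxA vc !mul0mx subr0.
have Vs : v2 *m ps M = (v2 *m ps M *m d) *m v.
  rewrite -mulmxA dv mulmxBr mulmx1 [v2 *m ps M *m _]mulmxA -(mulmxA v2) Cs.
  by rewrite mulmxA vc2 !mul0mx subr0.
have Vl : v *m pl M = (v *m pl M *m d2) *m v2.
  rewrite -mulmxA dv2 mulmxBr mulmx1 [v *m pl M *m _]mulmxA -(mulmxA v) Cl.
  by rewrite mulmxA vc !mul0mx subr0.
have aa' : row_mx c d *m col_mx u v = 1%:M by rewrite mul_row_col.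
have a'a : col_mx u v *m row_mx c d = 1%:M
  by rewrite mul_col_row uc ud vc vd -scalar_mx_block.
have bb' : row_mx c2 d2 *m col_mx u2 v2 = 1%:M by rewrite mul_row_col.
have b'b : col_mx u2 v2 *m row_mx c2 d2 = 1%:M
  by rewrite mul_col_row uc2 ud2 vc2 vd2 -scalar_mx_block.
have Hiso : z2iso M (z2sum X M').
  exists (row_mx c d), (col_mx u v), (row_mx c2 d2), (col_mx u2 v2).
  split; first by split.
  split.
  - apply: (intw_unswap aa' a'a).
    rewrite /= mul_col_mx mul_block_col !mul0mx addr0 add0r.
    by congr col_mx.
  - apply: (intw_unswap bb' a'a).
    rewrite /= mul_col_mx mul_block_col !mul0mx addr0 add0r.
    by congr col_mx.
  - apply: (intw_unswap aa' b'b).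
    rewrite /= mul_col_mx mul_block_col !mul0mx addr0 add0r.
    by congr col_mx.
exists M'; split => //.
- by apply: (@Z2mod_sumr X); apply: (iso_Z2mod HM Hiso).
- have h1 : (dT X + r <= dT M)%N.
    by rewrite -(mxrank1 'F_2 (dT X + r)) -a'a (leq_trans (mxrankM_maxl _ _)) // rank_leq_col.
  have h2 : (dB X + r2 <= dB M)%N.
    by rewrite -(mxrank1 'F_2 (dB X + r2)) -b'b (leq_trans (mxrankM_maxl _ _)) // rank_leq_col.
  rewrite /=; lia.
Qed.
Lemma F2_N1 : (- 1 : 'F_2) = 1. Proof. by apply/eqP. Qed.
Lemma F2_ne0 (a : 'F_2) : a != 0 -> a = 1.
Proof. by case: a => [[|[|n]] //= Hn] _; apply: val_inj. Qed.

Lemma colx1 n (x : 'rV['F_2]_n) j : x 0 j = 1 -> x *m (delta_mx j 0 : 'M_(n,1)) = 1%:M.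
Proof. by move=> H; rewrite -colE; apply/matrixP => a b; rewrite (ord1 a) (ord1 b) !mxE. Qed.
Lemma colx0 n (x : 'rV['F_2]_n) j : x 0 j = 0 -> x *m (delta_mx j 0 : 'M_(n,1)) = 0.
Proof. by move=> H; rewrite -colE; apply/matrixP => a b; rewrite (ord1 a) (ord1 b) !mxE. Qed.
Lemma M0eq n (A B : 'M['F_2]_(0, n)) : A = B.
Proof. by rewrite (flatmx0 A) (flatmx0 B). Qed.
Lemma Mn0eq n (A B : 'M['F_2]_(n, 0)) : A = B.
Proof. by rewrite (thinmx0 A) (thinmx0 B). Qed.
Lemma delta11 : (delta_mx 0 0 : 'M['F_2]_1) = 1%:M.
Proof. by apply/matrixP => a b; rewrite (ord1 a) (ord1 b) !mxE. Qed.


Lemma modF_ps : ps modF = row_mx 1%:M 1%:M :> 'M_(1, 1+1).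
Proof.
apply/matrixP=> i j; rewrite (ord1 i).
by case: (split_ordP j) => j' ->; rewrite ?row_mxEl ?row_mxEr !mxE (ord1 j').
Qed.
Lemma modF_pl : pl modF = col_mx 1%:M 1%:M :> 'M_(1+1, 1).
Proof.
apply/matrixP=> i j; rewrite (ord1 j).
by case: (split_ordP i) => i' ->; rewrite ?col_mxEu ?col_mxEd !mxE (ord1 i').
Qed.

Definition five X := X = modH \/ X = modHop \/ X = modF \/ X = modSb \/ X = modSt.

Definition step_concl M := exists X M', [/\ five X, is_Z2mod M',
   (dT M' + dB M' < dT M + dB M)%N & z2iso M (z2sum X M')].

Lemma finish M X (u : 'M['F_2]_(dT X, dT M)) (u2 : 'M_(dB X, dB M))
  (c : 'M_(dT M, dT X)) (c2 : 'M_(dB M, dB X)) : five X -> (0 < dT X + dB X)%N ->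
 is_Z2mod M -> u *m c = 1%:M -> u2 *m c2 = 1%:M ->
 u *m tm M = tm X *m u -> u2 *m ps M = ps X *m u -> u *m pl M = pl X *m u2 ->
 tm M *m c = c *m tm X -> ps M *m c = c2 *m ps X -> pl M *m c2 = c *m pl X ->
 step_concl M.
Proof.
move=> HX Hpos HM uc uc2 Ut Us Ul Ct Cs Cl.
have [M' [H1 H2 H3]] := split_lemma HM uc uc2 Ut Us Ul Ct Cs Cl.
exists X, M'; split => //; lia.
Qed.

Lemma finishF M (u : 'M['F_2]_(1 + 1, dT M)) (u2 : 'M_(1, dB M))
  (c : 'M_(dT M, 1 + 1)) (c2 : 'M_(dB M, 1)) :
 is_Z2mod M -> u *m c = 1%:M -> u2 *m c2 = 1%:M ->
 u *m tm M = block_mx 0 1%:M 1%:M 0 *m u -> u2 *m ps M = row_mx 1%:M 1%:M *m u ->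
 u *m pl M = col_mx 1%:M 1%:M *m u2 ->
 tm M *m c = c *m block_mx 0 1%:M 1%:M 0 -> ps M *m c = c2 *m row_mx 1%:M 1%:M ->
 pl M *m c2 = c *m col_mx 1%:M 1%:M ->
 step_concl M.
Proof.
move=> HM uc uc2 Ut Us Ul Ct Cs Cl.
apply: (@finish M modF u u2 c c2) => //; first by right; right; left.
- by rewrite modF_tm.
- by rewrite modF_ps.
- by rewrite modF_pl.
- by rewrite modF_tm.
- by rewrite modF_ps.
- by rewrite modF_pl.
Qed.
Lemma mul_thin m n (A : 'M['F_2]_(m,0)) (B : 'M_(0,n)) : A *m B = 0.
Proof. by rewrite (thinmx0 A) mul0mx. Qed.
Lemma exists_nz m n (A : 'M['F_2]_(m, n)) : A != 0 -> exists i j, A i j = 1.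
Proof.
move=> Hn.
case: (pickP (fun p : 'I_m * 'I_n => A p.1 p.2 != 0)) => [[i j] /= H|H].
  by exists i, j; apply: F2_ne0.
move/eqP: Hn; case; apply/matrixP => i j.
by move: (H (i, j)) => /= /negbFE /eqP ->; rewrite mxE.
Qed.

Lemma caseA M : is_Z2mod M -> (1%:M + tm M)%R != 0 -> step_concl M.
Proof.
move=> HM; case: (HM) => m1 m2 m3 m4 m5 Hn.
have [x [j [xj xtj]]] : exists (x : 'rV['F_2]_(dT M)) j, x 0 j = 1 /\ (x *m tm M) 0 j = 0.
  have [i [j]] := exists_nz Hn.
  rewrite !mxE.
  case: (eqVneq i j) => [eij | nij].
  - subst j => Hii.
    exists (delta_mx 0 i), i; rewrite -rowE !mxE !eqxx /=; split => //.
    by move: Hii; rewrite -[RHS]addr0 => /addrI.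
  - rewrite /= add0r => Hij.
    exists (row i (tm M)), j; split; first by rewrite mxE.
    by rewrite rowE -mulmxA m3 mulmx1 mxE eq_sym (negbTE nij) andbF.
pose z : 'M['F_2]_(dT M, 1) := delta_mx j 0.
have xz : x *m z = 1%:M by apply: colx1.
have xtz : x *m tm M *m z = 0 by rewrite /z; apply: colx0.
apply: (@finishF M (col_mx x (x *m tm M)) (x *m pl M) (row_mx z (tm M *m z)) (ps M *m z)) => //.
- by rewrite mul_col_row !mulmxA xtz -(mulmxA x (tm M) (tm M)) m3 mulmx1 xz -scalar_mx_block.
- by rewrite mulmxA -(mulmxA x (pl M) (ps M)) m4 mulmxDr mulmx1 mulmxDl xz xtz addr0.
- by rewrite mul_col_mx mul_block_col !mul0mx !mul1mx add0r addr0 -mulmxA m3 mulmx1.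
- by rewrite mul_row_col !mul1mx -mulmxA m4 mulmxDr mulmx1.
- by rewrite !mul_col_mx !mul1mx -mulmxA m2.
- by rewrite mul_mx_row mul_row_block !mulmx0 !mulmx1 add0r addr0 mulmxA m3 mul1mx.
- by rewrite !mul_mx_row !mulmx1 mulmxA m1.
- by rewrite mul_row_col !mulmx1 mulmxA m4 mulmxDl mul1mx.
Qed.

Lemma tm_one M : is_Z2mod M -> (1%:M + tm M)%R = 0 -> tm M = 1%:M.
Proof.
move=> _ H0.
by rewrite -(addKr 1%:M (tm M)) H0 addr0 -raddfN /= F2_N1.
Qed.

Lemma caseH M : is_Z2mod M -> (1%:M + tm M)%R = 0 -> ps M != 0 -> step_concl M.
Proof.
move=> HM H0; have Ht := tm_one HM H0; case: (HM) => m1 m2 m3 m4 m5 Hn.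
have [i [j Hij]] := exists_nz Hn.
pose w : 'M['F_2]_(1, dB M) := delta_mx 0 i.
pose c : 'M['F_2]_(dT M, 1) := delta_mx j 0.
have wc : w *m ps M *m c = 1%:M by rewrite /w -rowE; apply: colx1; rewrite mxE.
apply: (@finish M modH (w *m ps M) w c (ps M *m c)) => //=.
- by left.
- by rewrite mulmxA.
- by rewrite -mulmxA m1 mul1mx.
- by rewrite mul1mx.
- by rewrite -mulmxA m5 mulmx0 mul0mx.
- by rewrite Ht mulmx1 mul1mx.
- by rewrite mulmx1.
- by rewrite mulmxA m4 H0 mul0mx mulmx0.
Qed.

Lemma caseHop M : is_Z2mod M -> (1%:M + tm M)%R = 0 -> pl M != 0 -> step_concl M.
Proof.
move=> HM H0; have Ht := tm_one HM H0; case: (HM) => m1 m2 m3 m4 m5 Hn.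
have [i [j Hij]] := exists_nz Hn.
pose x : 'M['F_2]_(1, dT M) := delta_mx 0 i.
pose c2 : 'M['F_2]_(dB M, 1) := delta_mx j 0.
have xc : x *m pl M *m c2 = 1%:M by rewrite /x -rowE; apply: colx1; rewrite mxE.
apply: (@finish M modHop x (x *m pl M) (pl M *m c2) c2) => //=.
- by right; left.
- by rewrite mulmxA.
- by rewrite Ht mulmx1 mul1mx.
- by rewrite -mulmxA m4 H0 mulmx0 mul0mx.
- by rewrite mul1mx.
- by rewrite Ht mulmx1 mul1mx.
- by rewrite mulmxA m5 mul0mx mulmx0.
- by rewrite mulmx1.
Qed.

Lemma caseSt M : is_Z2mod M -> (1%:M + tm M)%R = 0 -> ps M = 0 -> pl M = 0 ->
  (0 < dT M)%N -> step_concl M.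
Proof.
move=> HM H0 Hs Hl Hd; have Ht := tm_one HM H0.
pose i : 'I_(dT M) := Ordinal Hd.
apply: (@finish M modSt (delta_mx 0 i) 0 (delta_mx i 0) 0) => //=.
- by right; right; right; right.
- by rewrite mul_delta_mx delta11.
- exact: M0eq.
- by rewrite Ht mulmx1 mul1mx.
- exact: M0eq.
- by rewrite Hl; apply: (@eq_trans _ _ 0); [exact: mulmx0 | symmetry; exact: mul_thin].
- by rewrite Ht mulmx1 mul1mx.
- by rewrite Hs; apply: (@eq_trans _ _ 0); [exact: mul0mx | symmetry; exact: mul_thin].
- by rewrite Hl mul0mx mulmx0.
Qed.

Lemma caseSb M : is_Z2mod M -> ps M = 0 -> pl M = 0 ->
  (0 < dB M)%N -> step_concl M.
Proof.
move=> HM Hs Hl Hd.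
pose i : 'I_(dB M) := Ordinal Hd.
apply: (@finish M modSb 0 (delta_mx 0 i) 0 (delta_mx i 0)) => //=.
- by right; right; right; left.
- exact: M0eq.
- by rewrite mul_delta_mx delta11.
- exact: M0eq.
- by rewrite Hs; apply: (@eq_trans _ _ 0); [exact: mulmx0 | symmetry; exact: mul_thin].
- exact: M0eq.
- exact: Mn0eq.
- exact: Mn0eq.
- by rewrite Hl; apply: (@eq_trans _ _ 0); [exact: mul0mx | symmetry; exact: mul_thin].
Qed.
Lemma step M : is_Z2mod M -> (0 < dT M + dB M)%N -> step_concl M.
Proof.
move=> HM Hpos.
case: (eqVneq (1%:M + tm M)%R 0) => H0; last exact: caseA HM H0.
case: (eqVneq (ps M) 0) => Hs; last exact: caseH.
case: (eqVneq (pl M) 0) => Hl; last exact: caseHop.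
case: (posnP (dT M)) => Hd; last exact: caseSt.
apply: caseSb => //; lia.
Qed.

Lemma swap12 X P Y : z2iso (z2sum X (z2sum P Y)) (z2sum P (z2sum X Y)).
Proof.
apply: iso_trans (iso_sym (iso_assoc X P Y)) _.
apply: iso_trans (iso_sum (iso_comm X P) (iso_refl Y)) _.
exact: iso_assoc.
Qed.

Lemma deep X P Y Y' : z2iso (z2sum X Y) Y' -> z2iso (z2sum X (z2sum P Y)) (z2sum P Y').
Proof. by move=> H; apply: iso_trans (swap12 X P Y) _; apply: iso_sum (iso_refl P) H. Qed.

Lemma front X P R : z2iso (z2sum X (z2sum P R)) (z2sum (z2sum X P) R).
Proof. exact: iso_sym (iso_assoc X P R). Qed.

Lemma absorb X h ho f sb st : five X -> exists h' ho' f' sb' st',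
  z2iso (z2sum X (z2std h ho f sb st)) (z2std h' ho' f' sb' st').
Proof.
case=> [->|[->|[->|[->|->]]]].
- by exists h.+1, ho, f, sb, st; apply: front.
- by exists h, ho.+1, f, sb, st; apply: deep; apply: front.
- by exists h, ho, f.+1, sb, st; apply: deep; apply: deep; apply: front.
- by exists h, ho, f, sb.+1, st; apply: deep; apply: deep; apply: deep; apply: front.
- by exists h, ho, f, sb, st.+1; apply: deep; apply: deep; apply: deep; apply: deep; apply: iso_refl.
Qed.

Lemma zero_iso M : (dT M + dB M = 0)%N -> z2iso M (z2std 0 0 0 0 0).
Proof.
move=> H.
have e1 : dT M = dT (z2std 0 0 0 0 0) by rewrite /=; lia.
have e2 : dB M = dB (z2std 0 0 0 0 0) by rewrite /=; lia.
apply: (@iso_cast M (z2std 0 0 0 0 0) e1 e2); apply: M0eq.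
Qed.

Lemma exist_part n : forall M, (dT M + dB M <= n)%N -> is_Z2mod M ->
  exists h ho f sb st, z2iso M (z2std h ho f sb st).
Proof.
elim: n => [|n IH] M Hn HM.
  by exists 0%N, 0%N, 0%N, 0%N, 0%N; apply: zero_iso; lia.
case: (posnP (dT M + dB M)) => Hp.
  by exists 0%N, 0%N, 0%N, 0%N, 0%N; apply: zero_iso.
have [X [M' [HX HM' Hlt Hiso]]] := step HM Hp.
have [h [ho [f [sb [st Hiso']]]]] := IH M' ltac:(lia) HM'.
have [h' [ho' [f' [sb' [st' Habs]]]]] := absorb h ho f sb st HX.
exists h', ho', f', sb', st'.
exact: iso_trans Hiso (iso_trans (iso_sum (iso_refl X) Hiso') Habs).
Qed.

Theorem proposition3p9 (M : z2data) :
  is_Z2mod M ->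
  (exists h ho f sb st : nat, z2iso M (z2std h ho f sb st)) /\
  (forall h ho f sb st : nat, z2iso M (z2std h ho f sb st) ->
     let fr := \rank ((1%:M + tm M)%R) in
     let kps := \rank (kermx (ps M)) in
     let kpl := \rank (kermx (pl M)) in
     [/\ f = fr,
         ho%:Z = (dT M)%:Z - fr%:Z - kpl%:Z,
         h%:Z = (dB M)%:Z - kps%:Z - fr%:Z,
         sb%:Z = kps%:Z - (dT M)%:Z + fr%:Z + kpl%:Z
       & st%:Z = kpl%:Z - (dB M)%:Z + kps%:Z]).
Proof.
move=> HM; split; first exact: (@exist_part (dT M + dB M)).
exact: uniq_part.
Qed.
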